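(* Let $n$ be a positive integer and let $x,y,z$ be complex numbers with $x+y+z=1$. (i) If $r,s,t$ are complex numbers with $r+s+t=n-1$, then $$\sum_{k=0}^n(-1)^k\binom rk\binom s{n-k}B_k(x)E_{n-k}(z)-(-1)^n\sum_{k=0}^n(-1)^k\binom rk\binom t{n-k}B_k(y)E_{n-k}(z)=\frac r2\sum_{l=0}^{n-1}(-1)^l\binom sl\binom t{n-1-l}E_l(y)E_{n-1-l}(x).$$ (ii) If $r,s,t$ are complex numbers with $r+s+t=n$, then $$r\,M_n(s,t;x,y)+s\,M_n(t,r;y,z)+t\,M_n(r,s;z,x)=0,$$ where for complex $a,b,u,v$ we set $$M_n(a,b;u,v):=\sum_{k=0}^n(-1)^k\binom ak\binom b{n-k}B_{n-k}(u)B_k(v).$$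
   Context: Bernoulli numbers are defined by $B_0=1$ and $\sum_{k=0}^n\binom{n+1}kB_k=0$ for $n\ge1$; Euler numbers by $E_0=1$ and $\sum_{0\le k\le n,\,2\mid n-k}\binom nkE_k=0$ for $n\ge1$. The Bernoulli polynomials are $B_n(x)=\sum_{k=0}^n\binom nkB_kx^{n-k}$ and the Euler polynomials are $E_n(x)=\sum_{k=0}^n\binom nk\frac{E_k}{2^k}(x-\frac12)^{n-k}$. For complex $z$ and integer $k\ge0$, $\binom zk=z(z-1)\cdots(z-k+1)/k!$ (with $\binom z0=1$), and $\binom zk=0$ for negative integers $k$. *)

(* Defs.v *)
From HB Require Import structures.
From mathcomp Require Import all_boot all_order all_algebra.
From mathcomp Require Import complex.
From mathcomp Require Import reals.
Set Implicit Arguments. Unset Strict Implicit. Unset Printing Implicit Defensive.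
Import Order.TTheory GRing.Theory Num.Theory.
Local Open Scope ring_scope.

Section Defs.
Variable F : fieldType.

Definition binomC (z : F) (k : nat) : F :=
  (\prod_(i < k) (z - i%:R)) / (k`!)%:R.

(* bern_list n = [:: B_0; ...; B_n], using
   B_0 = 1 and sum_{k=0}^n C(n+1,k) B_k = 0 for n >= 1, i.e.
   B_n = - (1/(n+1)) sum_{k<n} C(n+1,k) B_k. *)
Fixpoint bern_list (n : nat) : seq F :=
  match n with
  | 0 => [:: 1]
  | m.+1 => let l := bern_list m in
      rcons l (- ((m.+2)%:R)^-1 * \sum_(k < m.+1) ('C(m.+2, k))%:R * nth 0 l k)
  end.

Definition bernoulli (n : nat) : F := nth 0 (bern_list n) n.

(* euler_list n = [:: E_0; ...; E_n], using E_0 = 1 and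
   sum_{0<=k<=n, n-k even} C(n,k) E_k = 0 for n >= 1. *)
Fixpoint euler_list (n : nat) : seq F :=
  match n with
  | 0 => [:: 1]
  | m.+1 => let l := euler_list m in
      rcons l (- \sum_(k < m.+1 | ~~ odd (m.+1 - k)) ('C(m.+1, k))%:R * nth 0 l k)
  end.

Definition euler (n : nat) : F := nth 0 (euler_list n) n.

Definition bernoulli_poly (n : nat) (x : F) : F :=
  \sum_(k < n.+1) ('C(n, k))%:R * bernoulli k * x ^+ (n - k).

Definition euler_poly (n : nat) (x : F) : F :=
  \sum_(k < n.+1) ('C(n, k))%:R * (euler k / 2%:R ^+ k) * (x - 2%:R^-1) ^+ (n - k).

Definition Mfun (n : nat) (a b u v : F) : F :=
  \sum_(k < n.+1) (-1) ^+ k * binomC a k * binomC b (n - k)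
                  * bernoulli_poly (n - k) u * bernoulli_poly k v.
End Defs.

(* Main.v *)
Require Import Defs.
From HB Require Import structures.
From mathcomp Require Import all_boot all_order all_algebra.
From mathcomp Require Import complex.
From mathcomp Require Import reals.
From mathcomp Require Import ring lra zify.
Import Order.TTheory GRing.Theory Num.Theory.
Local Open Scope ring_scope.

Set Implicit Arguments. Unset Strict Implicit. Unset Printing Implicit Defensive.


Section A.
Variable F : numFieldType.

Lemma natr_neq0 (n : nat) : (n.+1%:R : F) != 0.
Proof. by rewrite pnatr_eq0. Qed.

Lemma fact_neq0 (n : nat) : (n`!%:R : F) != 0.
Proof. by rewrite pnatr_eq0 -lt0n fact_gt0. Qed.

Definition factR (n : nat) : F := n`!%:R.

Lemma factR0 : factR 0 = 1.
Proof. by rewrite /factR fact0. Qed.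

Lemma factRS n : factR n.+1 = n.+1%:R * factR n.
Proof. by rewrite /factR factS natrM. Qed.

Lemma factR_neq0 n : factR n != 0.
Proof. exact: fact_neq0. Qed.

Definition ff (a : F) (k : nat) : F := \prod_(i < k) (a - i%:R).

Lemma ff0 (a : F) : ff a 0 = 1.
Proof. by rewrite /ff big_ord0. Qed.

Lemma ffS (a : F) k : ff a k.+1 = ff a k * (a - k%:R).
Proof. by rewrite /ff big_ord_recr. Qed.

Lemma ffSl (a : F) k : ff a k.+1 = a * ff (a - 1) k.
Proof.
rewrite /ff big_ord_recl subr0; congr (_ * _); apply: eq_bigr => i _.
rewrite lift0 /= mulrS; ring.
Qed.

Lemma binomC_ff (a : F) k : binomC a k = ff a k / k`!%:R.
Proof. by []. Qed.

Lemma binomC_ffR (a : F) k : binomC a k = ff a k / factR k.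
Proof. by []. Qed.

Lemma binomC0 (a : F) : binomC a 0 = 1.
Proof. by rewrite binomC_ff ff0 fact0 divr1. Qed.

Lemma binomCS (a : F) k : binomC a k.+1 = binomC a k * (a - k%:R) / k.+1%:R.
Proof.
rewrite !binomC_ff ffS factS natrM.
have h1 := natr_neq0 k; have h2 := fact_neq0 k.
by field; rewrite -mulrS h1 h2.
Qed.

Lemma binomC_up (a : F) k : k.+1%:R * binomC a k.+1 = a * binomC (a - 1) k.
Proof.
rewrite !binomC_ff ffSl factS natrM.
have h1 := natr_neq0 k; have h2 := fact_neq0 k.
by field; rewrite -?mulrS ?h1 ?h2.
Qed.

Lemma binomC_down (a : F) k : a * binomC (a - 1) k = (a - k%:R) * binomC a k.
Proof.
rewrite -binomC_up binomCS.
have h1 := natr_neq0 k.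
by field; rewrite -?mulrS ?h1 ?h2.
Qed.

Lemma deriv0_const (p : {poly F}) : p^`() = 0 -> p = (p`_0)%:P.
Proof.
move=> H; apply/polyP => i; rewrite coefC; case: i => [|i] //=.
have := congr1 (fun q : {poly F} => q`_i) H.
rewrite coef_deriv coef0 => /eqP; rewrite -mulr_natr mulf_eq0 pnatr_eq0 orbF.
by move/eqP.
Qed.

Lemma const_eval (p : {poly F}) a b : p^`() = 0 -> p.[a] = p.[b].
Proof. by move/deriv0_const => ->; rewrite !hornerC. Qed.

(* integral on [0,1] *)
Definition Int (p : {poly F}) : F := \sum_(i < size p) p`_i / i.+1%:R.

Lemma Int_bound (p : {poly F}) N : (size p <= N)%N ->
  Int p = \sum_(i < N) p`_i / i.+1%:R.
Proof.
move=> H; rewrite /Int (big_ord_widen N (fun i => p`_i / i.+1%:R) H).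
rewrite big_mkcond /=; apply: eq_bigr => i _.
case: ifP => // /negbT; rewrite -leqNgt => Hi.
by rewrite nth_default // mul0r.
Qed.

Lemma IntD (p q : {poly F}) : Int (p + q) = Int p + Int q.
Proof.
set N := maxn (size p) (size q).
have Hp : (size p <= N)%N by rewrite leq_maxl.
have Hq : (size q <= N)%N by rewrite leq_maxr.
have Hpq : (size (p + q)%R <= N)%N by exact: size_polyD.
rewrite (Int_bound Hp) (Int_bound Hq) (Int_bound Hpq) -big_split /=.
by apply: eq_bigr => i _; rewrite coefD mulrDl.
Qed.

Lemma IntZ (a : F) (p : {poly F}) : Int (a *: p) = a * Int p.
Proof.
rewrite (Int_bound (N := size p)) ?size_scale_leq // /Int mulr_sumr.
by apply: eq_bigr => i _; rewrite coefZ mulrA.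
Qed.

Lemma Int0 : Int 0 = 0.
Proof. by rewrite /Int size_poly0 big_ord0. Qed.

Lemma IntN (p : {poly F}) : Int (- p) = - Int p.
Proof. by rewrite -scaleN1r IntZ mulN1r. Qed.

Lemma IntB (p q : {poly F}) : Int (p - q) = Int p - Int q.
Proof. by rewrite IntD IntN. Qed.

Lemma Int_sum I (r : seq I) (P : pred I) (f : I -> {poly F}) :
  Int (\sum_(i <- r | P i) f i) = \sum_(i <- r | P i) Int (f i).
Proof. exact: (big_morph Int IntD Int0). Qed.

Lemma IntC (c : F) : Int c%:P = c.
Proof.
rewrite (Int_bound (N := 1)) ?size_polyC ?leq_b1 //.
by rewrite big_ord1 coefC /= divr1.
Qed.

Lemma Int_deriv (p : {poly F}) : Int p^`() = p.[1] - p.[0].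
Proof.
have Hs : (size p^`() <= size p)%N.
  case: (eqVneq p 0) => [->|Hp]; first by rewrite deriv0 size_poly0.
  exact: ltnW (lt_size_deriv Hp).
rewrite (Int_bound Hs) horner_coef0 (horner_coef_wide _ (leqnSn (size p))).
rewrite big_ord_recl /= expr0 mulr1 addrC addKr.
apply: eq_bigr => i _; rewrite coef_deriv expr1n mulr1 -[_ *+ i.+1]mulr_natr mulfK ?natr_neq0 //.
Qed.

Lemma Int_parts (p q : {poly F}) : Int (p^`() * q) = (p * q).[1] - (p * q).[0] - Int (p * q^`()).
Proof. by rewrite -Int_deriv derivM IntD addrK. Qed.

Lemma const_Int (p : {poly F}) : p^`() = 0 -> Int p = p.[0].
Proof. by move/deriv0_const => ->; rewrite IntC hornerC. Qed.

End A.

Global Opaque factR.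

Ltac nzF := rewrite ?factR_neq0 -?natrD ?nat1r ?natr1 -?natrD ?pnatr_eq0 ?factR_neq0 //.



Section B.
Variable F : numFieldType.
Implicit Types (p u v : {poly F}) (a b x y : F) (k n : nat).

Lemma deriv_sum (I : Type) (r : seq I) (P : pred I) (f : I -> {poly F}) :
  (\sum_(i <- r | P i) f i)^`() = \sum_(i <- r | P i) (f i)^`().
Proof. exact: raddf_sum. Qed.

Definition Ap (c : nat -> F) (q : F) (k : nat) (u : {poly F}) : {poly F} :=
  \sum_(j < k.+1) ('C(k, j)%:R * c j) *: (u - q%:P) ^+ (k - j).
Definition ap (c : nat -> F) (q : F) (k : nat) (x : F) : F :=
  \sum_(j < k.+1) ('C(k, j)%:R * c j) * (x - q) ^+ (k - j).

Lemma Ap_eval c q k u a : (Ap c q k u).[a] = ap c q k u.[a].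
Proof.
rewrite /Ap /ap horner_sum; apply: eq_bigr => j _.
by rewrite hornerZ horner_exp hornerD hornerN hornerC.
Qed.

Lemma Ap_C c q k a : Ap c q k a%:P = (ap c q k a)%:P.
Proof.
rewrite /Ap /ap rmorph_sum; apply: eq_bigr => j _.
by rewrite rmorphM rmorphXn rmorphB /= mul_polyC. Qed.

Lemma Ap0 c q u : Ap c q 0 u = (c 0)%:P.
Proof. by rewrite /Ap big_ord1 /= bin0 mul1r expr0 alg_polyC. Qed.

Lemma ap0 c q x : ap c q 0 x = c 0.
Proof. by rewrite /ap big_ord1 /= bin0 mul1r expr0 mulr1. Qed.

Lemma Ap_deriv c q k u :
  (Ap c q k.+1 u)^`() = k.+1%:R *: (Ap c q k u * u^`()).
Proof.
rewrite /Ap deriv_sum big_ord_recr /= subnn expr0 derivZ derivC scaler0 addr0.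
rewrite mulr_suml scaler_sumr; apply: eq_bigr => j _.
have Hj : (j <= k)%N by rewrite -ltnS.
have Hb : ('C(k.+1, j) * (k - j).+1 = k.+1 * 'C(k, j))%N.
  by rewrite mulnC -subSn // -mul_bin_down.
rewrite derivZ deriv_exp derivB derivC subr0 (subSn Hj) /=.
rewrite -!mul_polyC -[_ *+ _]mulr_natr !rmorphM /= !polyC_natr.
transitivity ((('C(k.+1, j)%:R * (k - j).+1%:R) * (c j)%:P) * (u^`() * (u - q%:P) ^+ (k - j)) : {poly F}); first by ring.
rewrite -natrM Hb natrM; ring.
Qed.

Lemma Ap_deriv0 c q u : (Ap c q 0 u)^`() = 0.
Proof. by rewrite Ap0 derivC. Qed.

Variables (c1 c2 : nat -> F) (q1 q2 : F).

Definition Gp (n : nat) (a b : F) (u v : {poly F}) : {poly F} :=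
  \sum_(k < n.+1) ((-1) ^+ k * binomC a k * binomC b (n - k)) *:
     (Ap c1 q1 (n - k) u * Ap c2 q2 k v).
Definition Gs (n : nat) (a b : F) (x y : F) : F :=
  \sum_(k < n.+1) ((-1) ^+ k * binomC a k * binomC b (n - k)) *
     (ap c1 q1 (n - k) x * ap c2 q2 k y).

Lemma Gp_eval n a b u v w : (Gp n a b u v).[w] = Gs n a b u.[w] v.[w].
Proof.
rewrite /Gp /Gs horner_sum; apply: eq_bigr => j _.
by rewrite hornerZ hornerM !Ap_eval.
Qed.

Lemma Gp0 a b u v : Gp 0 a b u v = (c1 0 * c2 0)%:P.
Proof.
by rewrite /Gp big_ord1 /= !binomC0 expr0 !mul1r !Ap0 scale1r polyCM.
Qed.

Lemma Gp_deriv n a b u v :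
  (Gp n.+1 a b u v)^`() =
  b *: (Gp n a (b - 1) u v * u^`()) - a *: (Gp n (a - 1) b u v * v^`()).
Proof.
rewrite /Gp deriv_sum.
under eq_bigr do rewrite derivZ derivM scalerDr.
rewrite big_split /=; congr (_ + _).
- rewrite big_ord_recr /= subnn Ap_deriv0 mul0r scaler0 addr0.
  rewrite mulr_suml scaler_sumr; apply: eq_bigr => j _.
  have Hj : (j <= n)%N by rewrite -ltnS.
  rewrite (subSn Hj) Ap_deriv -scalerAl scalerA -!scalerAl scalerA.
congr (_ *: _); last by ring.
  transitivity ((-1) ^+ j * binomC a j * ((n - j).+1%:R * binomC b (n - j).+1)); first by ring.
  rewrite binomC_up; ring.
- rewrite big_ord_recl /= Ap_deriv0 mulr0 scaler0 add0r.
  rewrite mulr_suml scaler_sumr -sumrN; apply: eq_bigr => j _.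
  rewrite /bump /= subSS Ap_deriv -scalerAr scalerA.
  rewrite add1n -scalerAl scalerA -scaleNr; congr (_ *: _); last by ring.
  transitivity ((-1) ^+ j.+1 * binomC b (n - j) * (j.+1%:R * binomC a j.+1)); first by ring.
  rewrite binomC_up exprS; ring.
Qed.

Lemma Gp_comb n a b c u v : a + b + c = n%:R ->
  c *: Gp n a b u v + b *: Gp n a (b - 1) u v + a *: Gp n (a - 1) b u v = 0.
Proof.
move=> H; rewrite /Gp !scaler_sumr -!big_split /=; apply: big1 => k _.
rewrite !scalerA -!scalerDl; apply/eqP; rewrite scaler_eq0; apply/orP; left.
have Hk : (k <= n)%N by rewrite -ltnS.
have E1 : b * binomC (b - 1) (n - k) = (b - (n - k)%:R) * binomC b (n - k)
  by rewrite binomC_down.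
have E2 : a * binomC (a - 1) k = (a - k%:R) * binomC a k by rewrite binomC_down.
have E3 : (n - k)%:R = n%:R - k%:R :> F by rewrite natrB.
apply/eqP.
transitivity ((-1) ^+ k * ((c * binomC a k * binomC b (n - k)) +
    binomC a k * (b * binomC (b - 1) (n - k)) + (a * binomC (a - 1) k) * binomC b (n - k)));
  first by ring.
rewrite E1 E2 E3 -H; ring.
Qed.

End B.


Section C.
Variable F : numFieldType.
Implicit Types (p u v : {poly F}) (a b x y : F) (k n m : nat).

Local Notation bern := (bernoulli F).
Definition eul (j : nat) : F := euler F j / 2%:R ^+ j.
Definition hf : F := 2%:R^-1.

Lemma two_neq0 : (2%:R : F) != 0.
Proof. by rewrite pnatr_eq0. Qed.

Lemma size_bern_list m : size (bern_list F m) = m.+1.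
Proof. by elim: m => [|m IH] //=; rewrite size_rcons IH. Qed.

Lemma nth_bern_list m j : (j <= m)%N -> nth 0 (bern_list F m) j = bern j.
Proof.
elim: m => [|m IH]; first by rewrite leqn0 => /eqP ->.
rewrite leq_eqVlt => /orP [/eqP -> //|Hj].
by rewrite /= nth_rcons size_bern_list Hj IH.
Qed.

Lemma bern0 : bern 0 = 1.
Proof. by []. Qed.

Lemma bern_rec m : bern m.+1 =
  - (m.+2%:R)^-1 * \sum_(k < m.+1) 'C(m.+2, k)%:R * bern k.
Proof.
rewrite /bernoulli /= nth_rcons size_bern_list ltnn eqxx.
congr (_ * _); apply: eq_bigr => k _; rewrite nth_bern_list //.
by rewrite -ltnS.
Qed.

Lemma bern_sum m : \sum_(j < m.+2) 'C(m.+2, j)%:R * bern j = 0.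
Proof.
rewrite big_ord_recr /= binSn bern_rec mulrA mulrN mulfV ?natr_neq0 //.
by rewrite mulN1r addrN.
Qed.

Lemma size_euler_list m : size (euler_list F m) = m.+1.
Proof. by elim: m => [|m IH] //=; rewrite size_rcons IH. Qed.

Lemma nth_euler_list m j : (j <= m)%N -> nth 0 (euler_list F m) j = euler F j.
Proof.
elim: m => [|m IH]; first by rewrite leqn0 => /eqP ->.
rewrite leq_eqVlt => /orP [/eqP -> //|Hj].
by rewrite /= nth_rcons size_euler_list Hj IH.
Qed.

Lemma euler0 : euler F 0 = 1.
Proof. by []. Qed.

Lemma euler_rec m : euler F m.+1 =
  - \sum_(k < m.+1 | ~~ odd (m.+1 - k)) 'C(m.+1, k)%:R * euler F k.
Proof.
rewrite /euler /= nth_rcons size_euler_list ltnn eqxx.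
congr (- _); apply: eq_bigr => k _; rewrite nth_euler_list //.
by rewrite -ltnS.
Qed.

Lemma eul0 : eul 0 = 1.
Proof. by rewrite /eul euler0 expr0 divr1. Qed.

Lemma apB0 k : ap bern 0 k 0 = bern k.
Proof.
rewrite /ap big_ord_recr /= subnn expr0 mulr1 binn mul1r.
rewrite big1 ?add0r // => j _; rewrite oppr0 expr0n.
have -> : (k - j == 0)%N = false by rewrite subn_eq0 leqNgt ltn_ord.
by rewrite mulr0.
Qed.

Lemma apB1 k : ap bern 0 k.+2 1 = bern k.+2.
Proof.
rewrite /ap big_ord_recr /= subnn expr0 mulr1 binn mul1r.
rewrite -[X in _ = X]add0r; congr (_ + _).
rewrite -[RHS](bern_sum k); apply: eq_bigr => j _.
by rewrite subr0 expr1n mulr1.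
Qed.

Lemma apB_1 k : ap bern 0 k.+2 1 - ap bern 0 k.+2 0 = 0.
Proof. by rewrite apB1 apB0 subrr. Qed.

Lemma apB_lin x : ap bern 0 1 x = x - hf.
Proof.
rewrite /ap big_ord_recr big_ord1 /= bern0 bern_rec big_ord1 /= subr0 expr1 expr0.
rewrite /hf !bin0 binn !mul1r mulr1; ring.
Qed.

Lemma apE_sum k : ap eul hf k.+1 1 + ap eul hf k.+1 0 = 0.
Proof.
have h2 := two_neq0.
rewrite /ap -big_split /=.
have E : forall j : 'I_k.+2,
  'C(k.+1, j)%:R * eul j * (1 - hf) ^+ (k.+1 - j) +
  'C(k.+1, j)%:R * eul j * (0 - hf) ^+ (k.+1 - j) =
  hf ^+ k.+1 * ('C(k.+1, j)%:R * euler F j * (1 + (-1) ^+ (k.+1 - j))).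
  move=> j.
  have Hj : (j <= k.+1)%N by rewrite -ltnS.
  have -> : 1 - hf = hf by rewrite /hf; field.
  have Ek : hf ^+ k.+1 = hf ^+ (k.+1 - j) * hf ^+ j by rewrite -exprD subnK.
  have Ee : eul j = euler F j * hf ^+ j by rewrite /eul /hf exprVn.
  rewrite sub0r [(- hf) ^+ _]exprNn Ek Ee; ring.
rewrite (eq_bigr _ (fun j _ => E j)) -mulr_sumr; apply/eqP; rewrite mulf_eq0; apply/orP; right.
rewrite big_ord_recr /= subnn expr0 binn mul1r.
rewrite (eq_bigr (fun j : 'I_k.+1 => 2%:R * (if ~~ odd (k.+1 - j) then 'C(k.+1, j)%:R * euler F j else 0))); last first.
  move=> j _; case: ifP => Ho; last by rewrite -signr_odd (negbFE Ho) /= expr1 addrN mulr0 mulr0.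
  by rewrite -signr_odd (negPf Ho) /= expr0 mulrC.
rewrite -mulr_sumr -big_mkcond /= -(opprK (\sum_(_ < _ | _) _)) -euler_rec.
by apply/eqP; ring.
Qed.

Lemma apE_1 k : ap eul hf k.+1 1 = - ap eul hf k.+1 0.
Proof. by apply/eqP; rewrite -addr_eq0 apE_sum. Qed.

End C.


Section D.
Variable F : numFieldType.
Implicit Types (p u v : {poly F}) (a b x y : F) (k n m : nat).

Local Notation bern := (bernoulli F).
Local Notation BP := (Ap bern 0).
Local Notation EP := (Ap (@eul F) (@hf F)).

Lemma deriv1X : (1 - 'X : {poly F})^`() = -1.
Proof. by rewrite derivB derivC derivX sub0r. Qed.

Lemma Int_Ap c q k u :
  Int (Ap c q k u * u^`()) =
  ((Ap c q k.+1 u).[1] - (Ap c q k.+1 u).[0]) / k.+1%:R.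
Proof.
by rewrite -Int_deriv Ap_deriv IntZ [_ * Int _]mulrC mulfK ?natr_neq0.
Qed.

Lemma Int_BX k : Int (BP k 'X) = (k == 0)%:R.
Proof.
case: k => [|k]; first by rewrite Ap0 bern0 IntC.
have := Int_Ap bern 0 k.+1 'X.
by rewrite derivX mulr1 !Ap_eval !hornerX apB_1 mul0r => ->.
Qed.

Lemma Int_B1X k : Int (BP k (1 - 'X)) = (k == 0)%:R.
Proof.
case: k => [|k]; first by rewrite Ap0 bern0 IntC.
have := Int_Ap bern 0 k.+1 (1 - 'X).
rewrite deriv1X mulrN1 IntN !Ap_eval !hornerE subrr subr0.
move/eqP; rewrite eqr_oppLR => /eqP ->.
by rewrite -opprB apB_1 oppr0 mul0r oppr0.
Qed.

Lemma refl_B k : BP k (1 - 'X) = (-1) ^+ k *: BP k 'X.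
Proof.
elim: k => [|k IH]; first by rewrite !Ap0 expr0 scale1r.
set R := BP k.+1 (1 - 'X) - (-1) ^+ k.+1 *: BP k.+1 'X.
have HR : R^`() = 0.
  rewrite /R derivB derivZ !Ap_deriv deriv1X derivX IH mulr1 mulrN1.
  rewrite scalerN !scalerA -scaleNr -scalerBl exprS mulN1r.
  by apply/eqP; rewrite scaler_eq0; apply/orP; left; apply/eqP; ring.
have H0 : Int R = R.[0] by exact: const_Int.
have H1 : Int R = 0 by rewrite /R IntB IntZ Int_BX Int_B1X /= mulr0 subr0.
apply/eqP; rewrite -subr_eq0 -/R (deriv0_const HR) -horner_coef0 -H0 H1.
by rewrite polyC0.
Qed.

Lemma refl_E k : EP k (1 - 'X) = (-1) ^+ k *: EP k 'X.
Proof.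
elim: k => [|k IH]; first by rewrite !Ap0 expr0 scale1r.
set R := EP k.+1 (1 - 'X) - (-1) ^+ k.+1 *: EP k.+1 'X.
have HR : R^`() = 0.
  rewrite /R derivB derivZ !Ap_deriv deriv1X derivX IH mulr1 mulrN1.
  rewrite scalerN !scalerA -scaleNr -scalerBl exprS mulN1r.
  by apply/eqP; rewrite scaler_eq0; apply/orP; left; apply/eqP; ring.
have E1 : R.[1] = R.[0] by exact: const_eval.
have E2 : R.[0] + R.[1] = 0.
  rewrite /R !(hornerD, hornerN, hornerZ) !Ap_eval !(hornerD, hornerN, hornerC, hornerX) subrr subr0.
  have := apE_sum F k; have := apE_sum F k.
  move=> h1 h2.
  transitivity ((ap (@eul F) (hf F) k.+1 1 + ap (@eul F) (hf F) k.+1 0) -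
     (-1) ^+ k.+1 * (ap (@eul F) (hf F) k.+1 1 + ap (@eul F) (hf F) k.+1 0)); first by ring.
  by rewrite h1 mulr0 subr0.
have E3 : R.[0] = 0.
  move: E2; rewrite E1 -mulr2n -mulr_natr => /eqP; rewrite mulf_eq0 pnatr_eq0 orbF.
  by move/eqP.
apply/eqP; rewrite -subr_eq0 -/R (deriv0_const HR) -horner_coef0 E3.
by rewrite polyC0.
Qed.

Lemma parts_Ap c (q : F) m (Q : {poly F}) :
  Int (Ap c q m 'X * Q) =
  ((Ap c q m.+1 'X * Q).[1] - (Ap c q m.+1 'X * Q).[0]
     - Int (Ap c q m.+1 'X * Q^`())) / m.+1%:R.
Proof.
by rewrite -Int_parts Ap_deriv derivX mulr1 -scalerAl IntZ [_ * Int _]mulrC mulfK ?natr_neq0.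
Qed.

Lemma IBB m k :
  Int (BP m.+1 'X * BP k.+1 'X) =
  (-1) ^+ k * factR F m.+1 * factR F k.+1 / factR F (m + k).+2 * bern (m + k).+2.
Proof.
elim: k m => [|k IH] m.
- rewrite parts_Ap Ap_deriv Ap0 derivX !mulr1 bern0 scale1r polyC1 mulr1 Int_BX /= subr0.
  rewrite !hornerM !Ap_eval !hornerX !apB_lin apB1 apB0 addn0 expr0 mul1r.
  rewrite [factR F m.+2]factRS.
  by field; nzF.
- rewrite parts_Ap Ap_deriv derivX mulr1 -scalerAr IntZ IH.
  rewrite !hornerM !Ap_eval !hornerX !apB1 !apB0 subrr sub0r addSn addnS.
  rewrite [factR F m.+2]factRS [factR F k.+2]factRS exprS.
  by field; nzF.
Qed.

Lemma IEE l j :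
  Int (EP l 'X * EP j 'X) =
  (-1) ^+ j * factR F l * factR F j / factR F (l + j).+1 * (- 2%:R) * ap (@eul F) (hf F) (l + j).+1 0.
Proof.
elim: j l => [|j IH] l.
- rewrite parts_Ap Ap0 eul0 derivC mulr0 Int0 subr0 !mulr1.
  rewrite !Ap_eval !hornerX apE_1 addn0 factRS expr0.
  by field; nzF.
- rewrite parts_Ap Ap_deriv derivX mulr1 -scalerAr IntZ IH.
  rewrite !hornerM !Ap_eval !hornerX !apE_1 addSn addnS.
  rewrite [factR F l.+1]factRS [factR F j.+1]factRS exprS.
  by field; nzF.
Qed.

End D.


Section E.
Variable F : numFieldType.
Implicit Types (p u v : {poly F}) (a b x y : F) (k n m : nat).

Local Notation bern := (bernoulli F).
Local Notation BP := (Ap bern 0).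
Local Notation EP := (Ap (@eul F) (@hf F)).

Lemma tele n (r s : F) :
  (r + s - n%:R) * \sum_(k < n.+1) (-1) ^+ (n - k) * ff r k * ff s (n - k) =
  (-1) ^+ n * ff s n.+1 + ff r n.+1.
Proof.
pose b k := - (-1) ^+ (n.+1 - k) * ff r k * ff s (n.+1 - k).
have H : \sum_(0 <= k < n.+1) (r + s - n%:R) * ((-1) ^+ (n - k) * ff r k * ff s (n - k))
   = - (b n.+1 - b 0).
  rewrite -telescope_sumr // -sumrN; apply: eq_big_nat => k /andP [_ Hk].
  rewrite /b subSS (subSn (Hk : (k <= n)%N)) ffS ffS natrB //.
  rewrite exprS; ring.
rewrite mulr_sumr -(big_mkord xpredT (fun k => (r + s - n%:R) * ((-1) ^+ (n - k) * ff r k * ff s (n - k)))) H.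
rewrite /b subnn subn0 expr0 ff0 ff0 exprS; ring.
Qed.

Lemma sum_mid n (g : nat -> F) :
  \sum_(k < n.+2) (if ((k : nat) == 0%N) || ((k : nat) == n.+1) then 0 else g k) =
  \sum_(k < n.+2) g k - g 0%N - g n.+1.
Proof.
rewrite big_ord_recr [in RHS]big_ord_recr /= big_ord_recl [in RHS]big_ord_recl /=.
rewrite eqxx add0r addr0.
have -> : \sum_(i < n) (if bump 0 i == n.+1 then 0 else g (bump 0 i))
    = \sum_(i < n) g (bump 0 i).
  apply: eq_bigr => i _; rewrite /bump /= add1n eqSS.
  by rewrite (ltn_eqF (ltn_ord i)).
by set S := (\sum_(i < n) _); ring.
Qed.

Definition Mp n a b u v := Gp bern bern 0 0 n a b u v.
Definition Ms n a b x y := Gs bern bern 0 0 n a b x y.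

Definition Fp2 n (r s t : F) (x y z : {poly F}) : {poly F} :=
  r *: Mp n s t x y + s *: Mp n t r y z + t *: Mp n r s z x.
Definition Fs2 n (r s t : F) (x y z : F) : F :=
  r * Ms n s t x y + s * Ms n t r y z + t * Ms n r s z x.

Lemma Fp2_eval n (r s t : F) (x y z : {poly F}) (w : F) :
  (Fp2 n r s t x y z).[w] = Fs2 n r s t x.[w] y.[w] z.[w].
Proof. by rewrite /Fp2 /Fs2 !hornerD !hornerZ /Mp !Gp_eval. Qed.

Lemma Fp2_0 (r s t : F) (x y z : {poly F}) : r + s + t = 0 -> Fp2 0 r s t x y z = 0.
Proof.
move=> H; rewrite /Fp2 /Mp !Gp0 bern0 mulr1 polyC1 -!scalerDl.
by rewrite H scale0r.
Qed.

Lemma Fp2_deriv n (r s t : F) (x y z : {poly F}) :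
  r + s + t = n.+1%:R -> x^`() + y^`() + z^`() = 0 ->
  (Fp2 n.+1 r s t x y z)^`() =
  t *: (Fp2 n r s (t - 1) x y z * x^`()) - s *: (Fp2 n r (s - 1) t x y z * y^`()).
Proof.
move=> H Hd.
have Hz : z^`() = - x^`() - y^`() by rewrite -[RHS]addr0 -Hd; ring.
have H' : r + s + t - 1 = n%:R by rewrite H -natr1 addrK.
have Z1 : (t - 1) *: Mp n r s z x + s *: Mp n r (s - 1) z x + r *: Mp n (r - 1) s z x = 0.
  by apply: Gp_comb; rewrite -H'; ring.
have Z2 : (s - 1) *: Mp n t r y z + r *: Mp n t (r - 1) y z + t *: Mp n (t - 1) r y z = 0.
  by apply: Gp_comb; rewrite -H'; ring.
rewrite /Fp2 /Mp in Z1 Z2 *.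
rewrite !derivD !derivZ !Gp_deriv Hz.
rewrite -!mul_polyC !polyCB !polyC1 in Z1 Z2 *.
set A1 := Gp _ _ _ _ n r s z x in Z1 *.
set A2 := Gp _ _ _ _ n r (s - 1) z x in Z1 *.
set A3 := Gp _ _ _ _ n (r - 1) s z x in Z1 *.
set B1 := Gp _ _ _ _ n t r y z in Z2 *.
set B2 := Gp _ _ _ _ n t (r - 1) y z in Z2 *.
set B3 := Gp _ _ _ _ n (t - 1) r y z in Z2 *.
set C1 := Gp _ _ _ _ n s (t - 1) x y.
set C2 := Gp _ _ _ _ n (s - 1) t x y.
transitivity (t%:P * ((r%:P * C1 + s%:P * B3 + (t%:P - 1) * A1) * x^`())
  - s%:P * ((r%:P * C2 + (s%:P - 1) * B1 + t%:P * A2) * y^`())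
  + (s%:P * y^`() * ((s%:P - 1) * B1 + r%:P * B2 + t%:P * B3)
     - t%:P * x^`() * ((t%:P - 1) * A1 + s%:P * A2 + r%:P * A3))); first by ring.
by rewrite Z1 Z2 !mulr0 subrr addr0.
Qed.

Lemma Int_BXc m c : Int (BP m 'X * c%:P) = c * (m == 0)%:R.
Proof. by rewrite mulrC mul_polyC IntZ Int_BX. Qed.

Lemma Int_cB1X m c : Int (c%:P * BP m (1 - 'X)) = c * (m == 0)%:R.
Proof. by rewrite mul_polyC IntZ Int_B1X. Qed.

Lemma IntM1 n a b : Int (Mp n.+1 a b 'X 0%:P) = (-1) ^+ n.+1 * binomC a n.+1 * bern n.+1.
Proof.
rewrite /Mp /Gp Int_sum big_ord_recr /= big1 ?add0r.
  rewrite IntZ subnn Ap0 Ap_C apB0 bern0 polyC1 mul1r IntC binomC0 mulr1.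
  by [].
move=> k _; rewrite IntZ Ap_C apB0 Int_BXc.
have -> : (n.+1 - k == 0)%N = false by rewrite subn_eq0 leqNgt ltn_ord.
by rewrite !mulr0.
Qed.

Lemma IntM2 n a b : Int (Mp n.+1 a b 0%:P (1 - 'X)) = binomC b n.+1 * bern n.+1.
Proof.
rewrite /Mp /Gp Int_sum big_ord_recl /= big1 ?addr0.
  by rewrite IntZ subn0 Ap_C apB0 Int_cB1X expr0 binomC0 !mul1r mulr1.
by move=> k _; rewrite IntZ Ap_C apB0 Int_cB1X /bump /= !mulr0.
Qed.

Lemma IntM3 n a b : Int (Mp n.+1 a b (1 - 'X) 'X) =
  (\sum_(k < n.+2) (if ((k : nat) == 0%N) || ((k : nat) == n.+1) then 0
     else - (-1) ^+ (n.+1 - k) * ff a k * ff b (n.+1 - k))) / factR F n.+1 * bern n.+1.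
Proof.
rewrite /Mp /Gp Int_sum !big_distrl /=; apply: eq_bigr => -[k Hk] _ /=.
rewrite IntZ refl_B -scalerAl IntZ.
case: k Hk => [|k] Hk /=.
  by rewrite subn0 Ap0 bern0 polyC1 mulr1 Int_BX !mulr0 !mul0r.
case: (eqVneq k n) => [->|Hkn] /=.
  by rewrite subnn Ap0 bern0 polyC1 [1 * Ap _ _ _ _]mul1r Int_BX eqxx !mulr0 !mul0r.
have Hk' : (k < n)%N by rewrite ltn_neqAle Hkn -ltnS.
have E1 : (n.+1 - k.+1 = (n - k.+1).+1)%N by lia.
have E2 : ((n - k.+1) + k).+2 = n.+1 by lia.
rewrite E1 IBB E2 !binomC_ffR !exprS.
rewrite eqSS (negPf Hkn) -[(-1) ^+ k]signr_odd.
case: (odd k); rewrite /= ?expr1 ?expr0; by field; nzF.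
Qed.

Lemma Fp2_base n (r s t : F) : r + s + t = n.+1%:R ->
  Int (Fp2 n.+1 r s t 'X 0%:P (1 - 'X)) = 0.
Proof.
move=> H.
rewrite /Fp2 !IntD !IntZ IntM1 IntM2 IntM3 (sum_mid n (fun k => - (-1) ^+ (n.+1 - k) * ff r k * ff s (n.+1 - k))).
have T := tele n.+1 r s.
set D := \sum_(k < n.+2) (-1) ^+ (n.+1 - k) * ff r k * ff s (n.+1 - k) in T.
have -> : \sum_(k < n.+2) - (-1) ^+ (n.+1 - k) * ff r k * ff s (n.+1 - k) = - D.
  by rewrite /D -sumrN; apply: eq_bigr => k _; ring.
rewrite !binomC_ffR !subn0 !subnn !ff0 expr0.
rewrite [ff s n.+2]ffS [ff r n.+2]ffS in T.
have Ht : t = n.+1%:R - r - s by rewrite -H; ring.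
rewrite Ht.
set N := n.+1%:R.
transitivity (bern n.+1 / factR F n.+1 * ((r + s - N) * D
   + ((-1) ^+ n.+1 * r * ff s n.+1 + s * ff r n.+1
      + (N - r - s) * ((-1) ^+ n.+1 * ff s n.+1 + ff r n.+1)))); first by ring.
rewrite T; ring.
Qed.

Lemma Fp2_zero n : forall (r s t : F) (x y z : {poly F}),
  r + s + t = n%:R -> x + y + z = 1 -> Fp2 n r s t x y z = 0.
Proof.
elim: n => [|n IH] r s t x y z H Hxyz; first exact: Fp2_0.
have Hder : forall (r s t : F) (x y z : {poly F}), r + s + t = n.+1%:R ->
    x + y + z = 1 -> (Fp2 n.+1 r s t x y z)^`() = 0.
  move=> r' s' t' x' y' z' H' Hs'.
  have Hn : r' + s' + t' - 1 = n%:R by rewrite H' -natr1 addrK.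
  rewrite Fp2_deriv //; last by rewrite -!derivD Hs' -polyC1 derivC.
  rewrite !IH //; first by rewrite !mul0r !scaler0 subrr.
    by rewrite -Hn; ring.
  by rewrite -Hn; ring.
have Hsc : forall a b c : F, a + b + c = 1 -> Fs2 n.+1 r s t a b c = 0.
  move=> a b c Habc.
  have S1 : a%:P + (b%:P - b *: 'X) + (c%:P + b *: 'X) = 1.
    by rewrite -polyC1 -Habc !polyCD; ring.
  have S2 : 'X + 0%:P + (1 - 'X) = 1 :> {poly F} by rewrite polyC0; ring.
  have e1 := const_eval 0 1 (Hder r s t _ _ _ H S1).
  have e2 := const_eval a 0 (Hder r s t _ _ _ H S2).
  have e3 := const_Int (Hder r s t _ _ _ H S2).
  move: e1 e2 e3; rewrite !Fp2_eval !(hornerD, hornerN, hornerC, hornerZ, hornerX).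
  rewrite !mulr0 !mulr1 !subr0 !addr0 subrr => e1 e2 e3.
  rewrite Fp2_base // in e3.
  rewrite e1.
  have -> : c + b = 1 - a by rewrite -Habc; ring.
  by rewrite e2 -e3.
rewrite (deriv0_const (Hder r s t x y z H Hxyz)) -horner_coef0 Fp2_eval Hsc ?polyC0 //.
by rewrite -!hornerD Hxyz hornerC.
Qed.

End E.


Section Fi.
Variable F : numFieldType.
Implicit Types (k n m : nat).

Local Notation bern := (bernoulli F).
Local Notation BP := (Ap bern 0).
Local Notation EP := (Ap (@eul F) (@hf F)).

Definition Ge n (a b : F) (u v : {poly F}) := Gp (@eul F) bern (hf F) 0 n a b u v.
Definition Ges n (a b : F) (u v : F) := Gs (@eul F) bern (hf F) 0 n a b u v.
Definition Gee n (a b : F) (u v : {poly F}) := Gp (@eul F) (@eul F) (hf F) (hf F) n a b u v.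
Definition Gees n (a b : F) (u v : F) := Gs (@eul F) (@eul F) (hf F) (hf F) n a b u v.
Definition Ct n (a b : F) (u v : {poly F}) := if n is n'.+1 then Gee n' a b u v else 0.
Definition Cts n (a b : F) (u v : F) := if n is n'.+1 then Gees n' a b u v else 0.

Definition Fp1 n (r s t : F) (x y z : {poly F}) : {poly F} :=
  Ge n r s z x - (-1) ^+ n *: Ge n r t z y - (r / 2%:R) *: Ct n s t x y.
Definition Fs1 n (r s t : F) (x y z : F) : F :=
  Ges n r s z x - (-1) ^+ n * Ges n r t z y - (r / 2%:R) * Cts n s t x y.

Lemma Fp1_eval n (r s t : F) (x y z : {poly F}) (w : F) :
  (Fp1 n r s t x y z).[w] = Fs1 n r s t x.[w] y.[w] z.[w].
Proof.
rewrite /Fp1 /Fs1 !(hornerD, hornerN, hornerZ) /Ge /Ges !Gp_eval.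
by case: n => [|n] /=; rewrite ?horner0 // /Gee /Gees Gp_eval.
Qed.

Lemma Fp1_0 (r s t : F) (x y z : {poly F}) : Fp1 0 r s t x y z = 0.
Proof. by rewrite /Fp1 /Ct scaler0 subr0 expr0 scale1r /Ge !Gp0 subrr. Qed.

Lemma Ct_deriv n (s t : F) (x y : {poly F}) :
  (Ct n.+1 s t x y)^`() = t *: (Ct n s (t - 1) x y * x^`()) - s *: (Ct n (s - 1) t x y * y^`()).
Proof.
case: n => [|n] /=.
  by rewrite /Gee Gp0 derivC !mul0r !scaler0 subrr.
by rewrite /Gee Gp_deriv.
Qed.

Lemma Fp1_deriv n (r s t : F) (x y z : {poly F}) :
  r + s + t = n%:R -> x^`() + y^`() + z^`() = 0 ->
  (Fp1 n.+1 r s t x y z)^`() =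
  t *: (Fp1 n r s (t - 1) x y z * x^`()) - s *: (Fp1 n r (s - 1) t x y z * y^`()).
Proof.
move=> H Hd.
have Hz : z^`() = - x^`() - y^`() by rewrite -[RHS]addr0 -Hd; ring.
have ZA : t *: Ge n r s z x + s *: Ge n r (s - 1) z x + r *: Ge n (r - 1) s z x = 0.
  exact: Gp_comb.
have ZB : s *: Ge n r t z y + t *: Ge n r (t - 1) z y + r *: Ge n (r - 1) t z y = 0.
  by apply: Gp_comb; rewrite -H; ring.
rewrite /Fp1 !derivB !derivZ Ct_deriv /Ge !Gp_deriv -/(Ge _ _ _ _ _) Hz.
rewrite /Ge in ZA ZB *.
rewrite -!mul_polyC ?polyCB ?polyC1 in ZA ZB *.
set A1 := Gp _ _ _ _ n r s z x in ZA *.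
set A2 := Gp _ _ _ _ n r (s - 1) z x in ZA *.
set A3 := Gp _ _ _ _ n (r - 1) s z x in ZA *.
set B1 := Gp _ _ _ _ n r t z y in ZB *.
set B2 := Gp _ _ _ _ n r (t - 1) z y in ZB *.
set B3 := Gp _ _ _ _ n (r - 1) t z y in ZB *.
set C1 := Ct n s (t - 1) x y.
set C2 := Ct n (s - 1) t x y.
set sg := ((-1) ^+ n)%:P.
have Esg : ((-1) ^+ n.+1)%:P = - sg by rewrite exprS mulN1r polyCN.
rewrite Esg.
transitivity (t%:P * ((A1 - sg * B2 - (r / 2%:R)%:P * C1) * x^`())
  - s%:P * ((A2 - sg * B1 - (r / 2%:R)%:P * C2) * y^`())
  - (x^`() * (t%:P * A1 + s%:P * A2 + r%:P * A3) + sg * y^`() * (s%:P * B1 + t%:P * B2 + r%:P * B3)));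
  first by ring.
by rewrite ZA ZB !mulr0 addr0 subr0.
Qed.

Lemma Int_cBX m c : Int (c%:P * BP m 'X) = c * (m == 0)%:R.
Proof. by rewrite mul_polyC IntZ Int_BX. Qed.

Lemma IntG1 n a b : Int (Ge n a b 0%:P 'X) = binomC b n * ap (@eul F) (hf F) n 0.
Proof.
rewrite /Ge /Gp Int_sum big_ord_recl /= big1 ?addr0.
  by rewrite IntZ subn0 Ap_C Int_cBX expr0 binomC0 !mul1r mulr1.
by move=> k _; rewrite IntZ Ap_C Int_cBX /bump /= !mulr0.
Qed.

Lemma IntG2 n a b : Int (Ge n a b 0%:P (1 - 'X)) = binomC b n * ap (@eul F) (hf F) n 0.
Proof.
rewrite /Ge /Gp Int_sum big_ord_recl /= big1 ?addr0.
  by rewrite IntZ subn0 Ap_C Int_cB1X expr0 binomC0 !mul1r mulr1.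
by move=> k _; rewrite IntZ Ap_C Int_cB1X /bump /= !mulr0.
Qed.

Lemma IntG3 n a b : Int (Gee n a b 'X (1 - 'X)) =
  (\sum_(l < n.+1) (-1) ^+ (n - l) * ff a l * ff b (n - l)) / factR F n.+1
    * (- 2%:R) * ap (@eul F) (hf F) n.+1 0.
Proof.
rewrite /Gee /Gp Int_sum !big_distrl /=; apply: eq_bigr => -[l Hl] _ /=.
rewrite IntZ refl_E -scalerAr IntZ [Ap _ _ (n - l) _ * _]mulrC IEE.
have Hl' : (l <= n)%N by rewrite -ltnS.
have E : (l + (n - l)).+1 = n.+1 by rewrite subnKC.
rewrite E !binomC_ffR -[(-1) ^+ l]signr_odd.
by case: (odd l); rewrite /= ?expr1 ?expr0; field; nzF.
Qed.

Lemma Fp1_base n (r s t : F) : r + s + t = n%:R ->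
  Int (Fp1 n.+1 r s t 'X (1 - 'X) 0%:P) = 0.
Proof.
move=> H.
rewrite /Fp1 /Ct !IntB !IntZ IntG1 IntG2 IntG3.
have T := tele n s t.
set D := \sum_(l < n.+1) (-1) ^+ (n - l) * ff s l * ff t (n - l) in T *.
rewrite !binomC_ffR.
have Hr : r = n%:R - s - t by rewrite -H; ring.
rewrite Hr exprS.
set E0 := ap (@eul F) (hf F) n.+1 0.
transitivity (E0 / factR F n.+1 * (ff s n.+1 + (-1) ^+ n * ff t n.+1 - (s + t - n%:R) * D));
  first by field; nzF.
rewrite T; ring.
Qed.

Lemma Fp1_zero n : forall (r s t : F) (x y z : {poly F}),
  r + s + t = n%:R - 1 -> x + y + z = 1 -> Fp1 n r s t x y z = 0.
Proof.
elim: n => [|n IH] r s t x y z H Hxyz; first exact: Fp1_0.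
have Hder : forall (r s t : F) (x y z : {poly F}), r + s + t = n%:R ->
    x + y + z = 1 -> (Fp1 n.+1 r s t x y z)^`() = 0.
  move=> r' s' t' x' y' z' H' Hs'.
  rewrite Fp1_deriv //; last by rewrite -!derivD Hs' -polyC1 derivC.
  rewrite !IH //; first by rewrite !mul0r !scaler0 subrr.
    by rewrite -H'; ring.
  by rewrite -H'; ring.
have Hn : r + s + t = n%:R by rewrite H -natr1 addrK.
have Hsc : forall a b c : F, a + b + c = 1 -> Fs1 n.+1 r s t a b c = 0.
  move=> a b c Habc.
  have S1 : a%:P + (b%:P + c *: 'X) + (c%:P - c *: 'X) = 1.
    by rewrite -polyC1 -Habc !polyCD; ring.
  have S2 : 'X + (1 - 'X) + 0%:P = 1 :> {poly F} by rewrite polyC0; ring.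
  have e1 := const_eval 0 1 (Hder r s t _ _ _ Hn S1).
  have e2 := const_eval a 0 (Hder r s t _ _ _ Hn S2).
  have e3 := const_Int (Hder r s t _ _ _ Hn S2).
  move: e1 e2 e3; rewrite !Fp1_eval !(hornerD, hornerN, hornerC, hornerZ, hornerX).
  rewrite !mulr0 !mulr1 !subr0 !addr0 subrr => e1 e2 e3.
  rewrite Fp1_base // in e3.
  rewrite e1.
  have -> : b + c = 1 - a by rewrite -Habc; ring.
  by rewrite e2 -e3.
rewrite (deriv0_const (Hder r s t x y z Hn Hxyz)) -horner_coef0 Fp1_eval Hsc ?polyC0 //.
by rewrite -!hornerD Hxyz hornerC.
Qed.

End Fi.


Unset Implicit Arguments. Set Strict Implicit. Set Printing Implicit Defensive.

Lemma bp_ap (F : numFieldType) k (x : F) : bernoulli_poly k x = ap (bernoulli F) 0 k x.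
Proof. by rewrite /ap; apply: eq_bigr => j _; rewrite subr0. Qed.

Lemma ep_ap (F : numFieldType) k (x : F) : euler_poly k x = ap (@eul F) (hf F) k x.
Proof. by []. Qed.

Theorem theorem1p1 (R : realType) (n : nat) (x y z : R[i]) :
  (0 < n)%N -> x + y + z = 1 ->
  (forall r s t : R[i], r + s + t = n%:R - 1 ->
     \sum_(k < n.+1) (-1) ^+ k * binomC r k * binomC s (n - k)
        * bernoulli_poly k x * euler_poly (n - k) z
     - (-1) ^+ n * \sum_(k < n.+1) (-1) ^+ k * binomC r k * binomC t (n - k)
        * bernoulli_poly k y * euler_poly (n - k) z
     = r / 2%:R * \sum_(l < n) (-1) ^+ l * binomC s l * binomC t (n - 1 - l)
        * euler_poly l y * euler_poly (n - 1 - l) x)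
  /\
  (forall r s t : R[i], r + s + t = n%:R ->
     r * Mfun n s t x y + s * Mfun n t r y z + t * Mfun n r s z x = 0).
Proof.
move=> Hn Hxyz.
have HP : x%:P + y%:P + z%:P = 1 :> {poly R[i]} by rewrite -!polyCD Hxyz.
split.
- move=> r s t Hrst.
  have := Fp1_zero Hrst HP.
  move/(congr1 (fun p => p.[0])); rewrite Fp1_eval !hornerC ?horner0 /Fs1.
  case: n Hn Hrst => [//|n] _ Hrst.
  rewrite /Cts /Ges /Gees /Gs subSS subn0 => H.
  apply/eqP; rewrite -subr_eq0; apply/eqP; rewrite -[RHS]H.
  congr (_ - _ - _).
  + by apply: eq_bigr => k _; rewrite bp_ap ep_ap; ring.
  + by congr (_ * _); apply: eq_bigr => k _; rewrite bp_ap ep_ap; ring.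
  + by congr (_ * _); apply: eq_bigr => k _; rewrite !ep_ap; ring.
- move=> r s t Hrst.
  have := Fp2_zero Hrst HP.
  move/(congr1 (fun p => p.[0])); rewrite Fp2_eval !hornerC ?horner0 /Fs2 => <-.
  rewrite /Ms /Gs /Mfun.
  congr (_ * _ + _ * _ + _ * _); apply: eq_bigr => k _; rewrite !bp_ap; ring.
Qed.
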